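(* Let $(V,E,\sigma)$ be an influence graph and let $\mu : V \rightarrow \{+,-\}$ be a (partial) vertex labeling. If $W\subseteq V$ is a Minimal Inconsistent Core, then there is an answer set $X$ of the disjunctive logic program $P_D\cup\tau((V,E,\sigma),\mu)$ such that $\{i \mid \mathit{active}(i)\in X\}=W$.
   Context: An influence graph is a triple $(V,E,\sigma)$ where $V$ is a finite set of vertices, $E\subseteq V\times V$ is a set of directed edges (an edge from $j$ to $i$ is written $j\rightarrow i$), and $\sigma : E\rightarrow\{+,-\}$ is a partial labeling of the edges; in addition, some vertices of $V$ are designated as input vertices. Signs are multiplied as numbers ($++=--=+$, $+-=-+=-$). Given a partial vertex labeling $\mu:V\rightarrow\{+,-\}$ and total labelings $\sigma':E\rightarrow\{+,-\}$, $\mu':V\rightarrow\{+,-\}$, the value $\mu'(i)$ is called consistent if there is an edge $j\rightarrow i$ in $E$ with $\mu'(i)=\mu'(j)\sigma'(j,i)$. A subset $W\subseteq V$ is a Minimal Inconsistent Core (MIC) if (1) for all total extensions $\sigma'$ of $\sigma$ and $\mu'$ of $\mu$ there is some non-input vertex $i\in W$ such that $\mu'(i)$ is inconsistent, and (2) for every proper subset $W'\subset W$ there are total extensions $\sigma'$ of $\sigma$ and $\mu'$ of $\mu$ such that $\mu'(i)$ is consistent for every non-input vertex $i\in W'$. Answer set semantics: a disjunctive logic program is a set of rules $a_1;\dots;a_l \leftarrow b_1,\dots,b_m,\mathit{not}\ c_1,\dots,\mathit{not}\ c_n$ (with $l=0$ giving an integrity constraint, whose empty head is false). Rules with (capitalized)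 variables stand for all their ground instances obtained by substituting constants occurring in the program; a built-in comparison such as $S\neq T$ keeps only instances where the substituted constants differ. A conditional literal $\mathit{opposite}(U,V):\mathit{edge}(U,V)$ in a body, for fixed $V=v$, stands for the conjunction of all atoms $\mathit{opposite}(u,v)$ such that $\mathit{edge}(u,v)$ is a fact of the program (the empty conjunction if there is none). For a set $X$ of ground atoms, the reduct $P^X$ consists of $\{a_1,\dots,a_l\}\leftarrow b_1,\dots,b_m$ for each ground rule with $\{c_1,\dots,c_n\}\cap X=\emptyset$; $X$ is an answer set of $P$ if it is a $\subseteq$-minimal model of $P^X$. Here $+$ and $-$ are constants and vertex names are constants. The instance $\tau((V,E,\sigma),\mu)$ is the set of facts: $\mathit{vertex}(i)$ for each $i\in V$; $\mathit{edge}(j,i)$ for each $j\rightarrow i$ in $E$; $\mathit{observedE}(j,i,s)$ whenever $\sigma(j,i)=s$ is defined; $\mathit{observedV}(i,s)$ whenever $\mu(i)=s$ is defined; $\mathit{input}(i)$ for each input vertex $i$. The program $P_D$ consists of the rules $\mathit{labelV}(V,S)\leftarrow \mathit{observedV}(V,S)$; $\mathit{labelE}(U,V,S)\leftarrow \mathit{observedE}(U,V,S)$; $\mathit{active}(V);\mathit{inactive}(V)\leftarrow \mathit{vertex}(V),\mathit{not}\ \mathit{input}(V)$; $\mathit{edgeMIC}(U,V)\leftarrow \mathit{edge}(U,V),\mathit{active}(V)$; $\mathit{vertexMIC}(U)\leftarrow \mathit{edgeMIC}(U,V)$; $\mathit{vertexMIC}(V)\leftarrow \mathit{active}(V)$;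 $\mathit{labelV}(V,+);\mathit{labelV}(V,-)\leftarrow \mathit{vertexMIC}(V)$; $\mathit{labelE}(U,V,+);\mathit{labelE}(U,V,-)\leftarrow \mathit{edgeMIC}(U,V)$; $\mathit{opposite}(U,V)\leftarrow \mathit{labelE}(U,V,-),\mathit{labelV}(U,S),\mathit{labelV}(V,S)$; $\mathit{opposite}(U,V)\leftarrow \mathit{labelE}(U,V,+),\mathit{labelV}(U,S),\mathit{labelV}(V,T),S\neq T$; $\mathit{bottom}\leftarrow \mathit{active}(V),\mathit{opposite}(U,V):\mathit{edge}(U,V)$; $\leftarrow \mathit{not}\ \mathit{bottom}$; $\mathit{labelV}(V,+)\leftarrow \mathit{bottom},\mathit{vertex}(V)$; $\mathit{labelV}(V,-)\leftarrow \mathit{bottom},\mathit{vertex}(V)$; $\mathit{labelE}(U,V,+)\leftarrow \mathit{bottom},\mathit{edge}(U,V)$; $\mathit{labelE}(U,V,-)\leftarrow \mathit{bottom},\mathit{edge}(U,V)$; $\mathit{labelV'}(W,V,+);\mathit{labelV'}(W,V,-)\leftarrow \mathit{active}(W),\mathit{vertexMIC}(V)$; $\mathit{labelE'}(W,U,V,+);\mathit{labelE'}(W,U,V,-)\leftarrow \mathit{active}(W),\mathit{edgeMIC}(U,V)$; $\mathit{labelV'}(W,V,S)\leftarrow \mathit{active}(W),\mathit{observedV}(V,S)$; $\mathit{labelE'}(W,U,V,S)\leftarrow \mathit{active}(W),\mathit{observedE}(U,V,S)$; $\mathit{receive'}(W,V,+)\leftarrow \mathit{labelE'}(W,U,V,S),\mathit{labelV'}(W,U,S),V\neq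 W$; $\mathit{receive'}(W,V,-)\leftarrow \mathit{labelE'}(W,U,V,S),\mathit{labelV'}(W,U,T),V\neq W,S\neq T$; $\leftarrow \mathit{labelV'}(W,V,S),\mathit{active}(V),V\neq W,\mathit{not}\ \mathit{receive'}(W,V,S)$. *)

(* Defs.v *)
From mathcomp Require Import all_boot.
From Stdlib Require Import List.

Set Implicit Arguments.
Unset Strict Implicit.
Unset Printing Implicit Defensive.

Inductive sign := Plus | Minus.

Definition smul (a b : sign) : sign :=
  match a, b with
  | Plus, Plus => Plus
  | Minus, Minus => Plus
  | _, _ => Minus
  end.

(* An influence graph is given by a finite vertex type V, an edge relation
   E (E j i means the edge j -> i), a partial edge labeling sigma (only its
   values on edges of E are meaningful) and a set of input vertices. *)

Section Influence.
Variables (V : finType) (E : rel V) (sigma : V -> V -> option sign)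
          (input : pred V) (mu : V -> option sign).

Definition extendsE (sigma' : V -> V -> sign) : Prop :=
  forall j i s, E j i -> sigma j i = Some s -> sigma' j i = s.

Definition extendsV (mu' : V -> sign) : Prop :=
  forall i s, mu i = Some s -> mu' i = s.

Definition consistent (sigma' : V -> V -> sign) (mu' : V -> sign) (i : V) :=
  exists j, E j i /\ mu' i = smul (mu' j) (sigma' j i).

Definition isMIC (W : {set V}) : Prop :=
  (forall sigma' mu', extendsE sigma' -> extendsV mu' ->
     exists i, i \in W /\ ~~ input i /\ ~ consistent sigma' mu' i)
  /\
  (forall W' : {set V}, W' \proper W ->
     exists sigma' mu', extendsE sigma' /\ extendsV mu' /\
       forall i, i \in W' -> ~~ input i -> consistent sigma' mu' i).

End Influence.

Record rule (A : Type) := mkRule { head : list A; pos : list A; neg : list A }.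
Arguments mkRule {A}.

Definition program (A : Type) := rule A -> Prop.

(* M is a model of the negation-free program P (empty head = false) *)
Definition is_model (A : Type) (P : program A) (M : A -> Prop) : Prop :=
  forall r, P r -> (forall b, In b (pos r) -> M b) ->
    exists h, In h (head r) /\ M h.

Definition reduct (A : Type) (P : program A) (X : A -> Prop) : program A :=
  fun r' => exists r, P r /\ (forall c, In c (neg r) -> ~ X c) /\
                      r' = mkRule (head r) (pos r) nil.

Definition answer_set (A : Type) (P : program A) (X : A -> Prop) : Prop :=
  is_model (reduct P X) X /\
  forall Y : A -> Prop, (forall a, Y a -> X a) ->
    is_model (reduct P X) Y -> forall a, X a -> Y a.

Definition union_prog (A : Type) (P Q : program A) : program A :=
  fun r => P r \/ Q r.

Section Encoding.
Variable V : finType.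

Inductive const := CV of V | CPlus | CMinus.

Definition csign (s : sign) : const :=
  match s with Plus => CPlus | Minus => CMinus end.

Inductive atom :=
| a_vertex of const
| a_edge of const & const
| a_observedE of const & const & const
| a_observedV of const & const
| a_input of const
| a_labelV of const & const
| a_labelE of const & const & const
| a_active of const
| a_inactive of const
| a_edgeMIC of const & const
| a_vertexMIC of const
| a_opposite of const & const
| a_bottom
| a_labelV' of const & const & const
| a_labelE' of const & const & const & const
| a_receive' of const & const & const.

Notation R := (@mkRule atom).

Variables (E : rel V) (sigma : V -> V -> option sign)
          (input : pred V) (mu : V -> option sign).

Definition edgeC (c d : const) : bool :=
  match c, d with CV j, CV i => E j i | _, _ => false end.

Inductive tau : program atom :=
| t_vertex i : tau (R [:: a_vertex (CV i)] nil nil)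
| t_edge j i : E j i -> tau (R [:: a_edge (CV j) (CV i)] nil nil)
| t_observedE j i s : E j i -> sigma j i = Some s ->
    tau (R [:: a_observedE (CV j) (CV i) (csign s)] nil nil)
| t_observedV i s : mu i = Some s ->
    tau (R [:: a_observedV (CV i) (csign s)] nil nil)
| t_input i : input i -> tau (R [:: a_input (CV i)] nil nil).

(* All ground instances of P_D over the constants of the program. *)
Inductive PD : program atom :=
| r1 v s : PD (R [:: a_labelV v s] [:: a_observedV v s] nil)
| r2 u v s : PD (R [:: a_labelE u v s] [:: a_observedE u v s] nil)
| r3 v : PD (R [:: a_active v; a_inactive v] [:: a_vertex v] [:: a_input v])
| r4 u v : PD (R [:: a_edgeMIC u v] [:: a_edge u v; a_active v] nil)
| r5 u v : PD (R [:: a_vertexMIC u] [:: a_edgeMIC u v] nil)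
| r6 v : PD (R [:: a_vertexMIC v] [:: a_active v] nil)
| r7 v : PD (R [:: a_labelV v CPlus; a_labelV v CMinus] [:: a_vertexMIC v] nil)
| r8 u v : PD (R [:: a_labelE u v CPlus; a_labelE u v CMinus]
                 [:: a_edgeMIC u v] nil)
| r9 u v s : PD (R [:: a_opposite u v]
                   [:: a_labelE u v CMinus; a_labelV u s; a_labelV v s] nil)
| r10 u v s t : s <> t ->
    PD (R [:: a_opposite u v]
          [:: a_labelE u v CPlus; a_labelV u s; a_labelV v t] nil)
(* bottom <- active(V), opposite(U,V) : edge(U,V) *)
| r11 v : PD (R [:: a_bottom]
                (a_active v :: [seq a_opposite (CV u) v | u <- enum V & edgeC (CV u) v])
                nil)
| r12 : PD (R nil nil [:: a_bottom])
| r13 v : PD (R [:: a_labelV v CPlus] [:: a_bottom; a_vertex v] nil)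
| r14 v : PD (R [:: a_labelV v CMinus] [:: a_bottom; a_vertex v] nil)
| r15 u v : PD (R [:: a_labelE u v CPlus] [:: a_bottom; a_edge u v] nil)
| r16 u v : PD (R [:: a_labelE u v CMinus] [:: a_bottom; a_edge u v] nil)
| r17 w v : PD (R [:: a_labelV' w v CPlus; a_labelV' w v CMinus]
                  [:: a_active w; a_vertexMIC v] nil)
| r18 w u v : PD (R [:: a_labelE' w u v CPlus; a_labelE' w u v CMinus]
                    [:: a_active w; a_edgeMIC u v] nil)
| r19 w v s : PD (R [:: a_labelV' w v s] [:: a_active w; a_observedV v s] nil)
| r20 w u v s : PD (R [:: a_labelE' w u v s]
                      [:: a_active w; a_observedE u v s] nil)
| r21 w u v s : v <> w ->
    PD (R [:: a_receive' w v CPlus] [:: a_labelE' w u v s; a_labelV' w u s] nil)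
| r22 w u v s t : v <> w -> s <> t ->
    PD (R [:: a_receive' w v CMinus] [:: a_labelE' w u v s; a_labelV' w u t] nil)
| r23 w v s : v <> w ->
    PD (R nil [:: a_labelV' w v s; a_active v] [:: a_receive' w v s]).

Definition PD_tau : program atom := union_prog PD tau.

End Encoding.

(* Main.v *)
Require Import Defs.
From mathcomp Require Import all_boot.
From Stdlib Require Import List ClassicalEpsilon Classical.

Set Implicit Arguments.
Unset Strict Implicit.

Section Proof.
Variables (V : finType) (E : rel V) (sigma : V -> V -> option sign)
    (input : pred V) (mu : V -> option sign) (W : {set V}).
Hypothesis HM : isMIC E sigma input mu W.
Local Notation cP := (CPlus V).
Local Notation cM := (CMinus V).
Local Notation cs := (csign V).
Local Notation bot := (a_bottom V).

Lemma W_noinput i : i \in W -> ~~ input i.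
Proof.
move=> iW; apply/negP => Hin.
have [s' [m' [He [Hv Hc]]]] := HM.2 (W :\ i) (properD1 iW).
have [j [jW [jn jinc]]] := HM.1 _ _ He Hv.
apply: jinc; apply: Hc => //.
rewrite in_setD1 jW andbT; apply/eqP => eji; subst.
by rewrite Hin in jn.
Qed.

Definition goodw (w : V) (p : (V -> V -> sign) * (V -> sign)) : Prop :=
  w \in W -> extendsE E sigma p.1 /\ extendsV mu p.2 /\
    forall i, i \in W :\ w -> ~~ input i -> consistent E p.1 p.2 i.

Lemma goodw_ex w : exists p, goodw w p.
Proof.
case: (boolP (w \in W)) => wW.
  have [s' [m' [He [Hv Hc]]]] := HM.2 (W :\ w) (properD1 wW).
  by exists (s', m').
by exists (fun _ _ => Plus, fun _ => Plus) => H; rewrite H in wW.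
Qed.

Definition pw w := proj1_sig (constructive_indefinite_description _ (goodw_ex w)).
Definition lew w := (pw w).1.
Definition lvw w := (pw w).2.
Lemma pw_spec w : w \in W -> extendsE E sigma (lew w) /\ extendsV mu (lvw w) /\
    forall i, i \in W :\ w -> ~~ input i -> consistent E (lew w) (lvw w) i.
Proof. exact: (proj2_sig (constructive_indefinite_description _ (goodw_ex w))). Qed.

Definition vmic (v : V) : Prop := v \in W \/ exists j, E v j /\ j \in W.
Definition vmo v := vmic v \/ mu v <> None.
Definition emo u v := E u v /\ (v \in W \/ sigma u v <> None).

Definition X (a : atom V) : Prop :=
  match a with
  | a_vertex (CV i) => True
  | a_edge (CV j) (CV i) => E j i
  | a_observedE (CV j) (CV i) s => E j i /\ exists t, sigma j i = Some t /\ s = cs t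
  | a_observedV (CV i) s => exists t, mu i = Some t /\ s = cs t
  | a_input (CV i) => input i
  | a_labelV (CV i) s => s = cP \/ s = cM
  | a_labelE (CV j) (CV i) s => E j i /\ (s = cP \/ s = cM)
  | a_active (CV i) => i \in W
  | a_inactive (CV i) => ~~ input i /\ i \notin W
  | a_edgeMIC (CV j) (CV i) => E j i /\ i \in W
  | a_vertexMIC (CV i) => vmic i
  | a_opposite (CV j) (CV i) => E j i
  | a_bottom => True
  | a_labelV' (CV w) (CV v) s => w \in W /\ vmo v /\ s = cs (lvw w v)
  | a_labelE' (CV w) (CV u) (CV v) s => w \in W /\ emo u v /\ s = cs (lew w u v)
  | a_receive' (CV w) (CV v) s => w \in W /\ v <> w /\
      exists u, emo u v /\ vmo u /\ s = cs (smul (lvw w u) (lew w u v))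
  | _ => False
  end.

Lemma cs_inj s t : cs s = cs t -> s = t.
Proof. by case: s; case: t. Qed.

Ltac hd x := exists x; split; [simpl; tauto|].

Lemma X_model : is_model (reduct (PD_tau E sigma input mu) X) X.
Proof.
move=> r' [r [Hr [Hneg ->]]] /= Hpos.
case: Hr => Hr.
- destruct Hr; simpl in *.
  + have P := Hpos _ (or_introl erefl).
    clear Hpos Hneg; case: v P => // i [t [_ ->]].
    exists (a_labelV (CV i) (cs t)); split; first by left.
    by case: t; [left|right].
  + have P := Hpos _ (or_introl erefl).
    clear Hpos Hneg; case: u P => // j; case: v => // i [Eji [t [_ ->]]].
    exists (a_labelE (CV j) (CV i) (cs t)); split; first by left.
    by split=> //; case: t; [left|right].
  + have P := Hpos _ (or_introl erefl).
    have N := Hneg _ (or_introl erefl).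
    clear Hpos Hneg; case: v P N => // i _ N.
    case iW: (i \in W).
      exists (a_active (CV i)); split; first by left. done.
    exists (a_inactive (CV i)); split; first by right; left.
    by split; [apply/negP|rewrite iW].
  + have P1 := Hpos _ (or_introl erefl).
    have P2 := Hpos _ (or_intror (or_introl erefl)).
    clear Hpos Hneg; case: u P1 P2 => // j; case: v => // i P1 P2.
    by exists (a_edgeMIC (CV j) (CV i)); split; first by left.
  + have P1 := Hpos _ (or_introl erefl).
    clear Hpos Hneg; case: u P1 => // j; case: v => // i [Eji iW].
    exists (a_vertexMIC (CV j)); split; first by left.
    by right; exists i.
  + have P1 := Hpos _ (or_introl erefl).
    clear Hpos Hneg; case: v P1 => // i iW.
    exists (a_vertexMIC (CV i)); split; first by left.
    by left.
  + have P1 := Hpos _ (or_introl erefl).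
    clear Hpos Hneg; case: v P1 => // i _.
    exists (a_labelV (CV i) cP); split; first by left.
    by left.
  + have P1 := Hpos _ (or_introl erefl).
    clear Hpos Hneg; case: u P1 => // j; case: v => // i [Eji _].
    exists (a_labelE (CV j) (CV i) cP); split; first by left.
    by split=> //; left.
  + have P1 := Hpos _ (or_introl erefl).
    clear Hpos Hneg; case: u P1 => // j; case: v => // i [Eji _].
    by exists (a_opposite (CV j) (CV i)); split; first by left.
  + have P1 := Hpos _ (or_introl erefl).
    clear Hpos Hneg; case: u P1 => // j; case: v => // i [Eji _].
    by exists (a_opposite (CV j) (CV i)); split; first by left.
  + by exists bot; split; first by left.
  + by case: (Hneg bot (or_introl erefl)).
  + have P2 := Hpos _ (or_intror (or_introl erefl)).
    clear Hpos Hneg; case: v P2 => // i _.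
    exists (a_labelV (CV i) cP); split; first by left.
    by left.
  + have P2 := Hpos _ (or_intror (or_introl erefl)).
    clear Hpos Hneg; case: v P2 => // i _.
    exists (a_labelV (CV i) cM); split; first by left.
    by right.
  + have P2 := Hpos _ (or_intror (or_introl erefl)).
    clear Hpos Hneg; case: u P2 => // j; case: v => // i Eji.
    exists (a_labelE (CV j) (CV i) cP); split; first by left.
    by split=> //; left.
  + have P2 := Hpos _ (or_intror (or_introl erefl)).
    clear Hpos Hneg; case: u P2 => // j; case: v => // i Eji.
    exists (a_labelE (CV j) (CV i) cM); split; first by left.
    by split=> //; right.
  + have P1 := Hpos _ (or_introl erefl).
    have P2 := Hpos _ (or_intror (or_introl erefl)).
    clear Hpos Hneg; case: w P1 P2 => // w; case: v => // v wW Hv.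
    case Hl: (lvw w v).
      exists (a_labelV' (CV w) (CV v) cP); split; first by left.
      by split=> //; split; [left|rewrite Hl].
    exists (a_labelV' (CV w) (CV v) cM); split; first by right; left.
    by split=> //; split; [left|rewrite Hl].
  + have P1 := Hpos _ (or_introl erefl).
    have P2 := Hpos _ (or_intror (or_introl erefl)).
    clear Hpos Hneg; case: w P1 P2 => // w; case: u => // u; case: v => // v wW [Euv vW].
    case Hl: (lew w u v).
      exists (a_labelE' (CV w) (CV u) (CV v) cP); split; first by left.
      by split=> //; split; [split=> //; left|rewrite Hl].
    exists (a_labelE' (CV w) (CV u) (CV v) cM); split; first by right; left.
    by split=> //; split; [split=> //; left|rewrite Hl].
  + have P1 := Hpos _ (or_introl erefl).
    have P2 := Hpos _ (or_intror (or_introl erefl)).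
    clear Hpos Hneg; case: w P1 P2 => // w; case: v => // v wW [t [Hmu ->]].
    exists (a_labelV' (CV w) (CV v) (cs t)); split; first by left.
    split=> //; split; first by right; rewrite Hmu.
    by rewrite ((pw_spec wW).2.1 v t Hmu).
  + have P1 := Hpos _ (or_introl erefl).
    have P2 := Hpos _ (or_intror (or_introl erefl)).
    clear Hpos Hneg; case: w P1 P2 => // w; case: u => // u; case: v => // v wW [Euv [t [Hs ->]]].
    exists (a_labelE' (CV w) (CV u) (CV v) (cs t)); split; first by left.
    split=> //; split; first by split=> //; right; rewrite Hs.
    by rewrite ((pw_spec wW).1 u v t Euv Hs).
  + have P1 := Hpos _ (or_introl erefl).
    have P2 := Hpos _ (or_intror (or_introl erefl)).
    clear Hpos Hneg; case: w H P1 P2 => // w; case: u => // u; case: v => // v Hvw [wW [Huv ->]] [_ [Hu Heq]].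
    exists (a_receive' (CV w) (CV v) cP); split; first by left.
    split=> //; split; first by move=> e; apply: Hvw; rewrite e.
    exists u; split=> //; split=> //.
    move/cs_inj: Heq => ->.
    by case: (lvw w u).
  + have P1 := Hpos _ (or_introl erefl).
    have P2 := Hpos _ (or_intror (or_introl erefl)).
    clear Hpos Hneg; case: w H H0 P1 P2 => // w; case: u => // u; case: v => // v Hvw Hst [wW [Huv Es]] [_ [Hu Et]]; subst.
    exists (a_receive' (CV w) (CV v) cM); split; first by left.
    split=> //; split; first by move=> e; apply: Hvw; rewrite e.
    exists u; split=> //; split=> //.
    move: Hst; case: (lvw w u); case: (lew w u v) => //.
  + have P1 := Hpos _ (or_introl erefl).
    have P2 := Hpos _ (or_intror (or_introl erefl)).
    have N := Hneg _ (or_introl erefl).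
    clear Hpos Hneg; case: w H P1 P2 N => // w; case: v => // v Hvw [wW [_ ->]] vW N.
    have vne : v != w by apply/eqP => e; apply: Hvw; rewrite e.
    have [j [Ejv Heq]] := (pw_spec wW).2.2 v
      (ltac:(by rewrite in_setD1 vne vW)) (W_noinput vW).
    exfalso; apply: N; split=> //; split; first by move=> e; apply: Hvw; rewrite e.
    exists j; split; first by split=> //; left.
    split; first by left; right; exists v.
    by rewrite Heq.
- destruct Hr; simpl in *.
  + by exists (a_vertex (CV i)); split; first by left.
  + by exists (a_edge (CV j) (CV i)); split; first by left.
  + exists (a_observedE (CV j) (CV i) (cs s)); split; first by left.
    by split=> //; exists s.
  + exists (a_observedV (CV i) (cs s)); split; first by left.
    by exists s.
  + by exists (a_input (CV i)); split; first by left.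
Qed.

Lemma inmap (s : list V) (i : V) b :
  In b [seq a_opposite (CV u) (CV i) | u <- s & E u i] ->
  exists u, E u i /\ b = a_opposite (CV u) (CV i).
Proof.
elim: s => //= u s IH.
case Eui: (E u i) => /=; last exact: IH.
by case=> [<-|/IH //]; exists u.
Qed.

Section Min.
Variable Y : atom V -> Prop.
Hypothesis HYX : forall a, Y a -> X a.
Hypothesis HY : is_model (reduct (PD_tau E sigma input mu) X) Y.

Lemma fire r : PD E r -> (forall c, In c (Defs.neg r) -> ~ X c) ->
  (forall b, In b (Defs.pos r) -> Y b) -> exists h, In h (Defs.head r) /\ Y h.
Proof.
move=> Hr Hn Hp.
exact: (HY (r := mkRule (Defs.head r) (Defs.pos r) nil)
  (ex_intro _ r (conj (or_introl Hr) (conj Hn erefl))) Hp).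
Qed.

Lemma fire1 a b : PD E (mkRule [:: a] b nil) -> (forall x, In x b -> Y x) -> Y a.
Proof.
move=> Hr Hp; have [h [[<-|[]] Yh]] := fire Hr (fun c (H : In c nil) => match H with end) Hp.
done.
Qed.

Lemma fact a : tau E sigma input mu (mkRule [:: a] nil nil) -> Y a.
Proof.
move=> Hr.
have := HY (r := mkRule [:: a] nil nil)
  (ex_intro _ _ (conj (or_intror Hr) (conj (fun c (H : In c nil) => match H with end) erefl))).
by case=> // h [[<-|[]] Yh].
Qed.

Lemma Y_vertex i : Y (a_vertex (CV i)).
Proof. exact: fact (t_vertex E sigma input mu i). Qed.

Lemma Y_edge j i : X (a_edge (CV j) (CV i)) -> Y (a_edge (CV j) (CV i)).
Proof. move=> H; exact: fact (@t_edge V E sigma input mu j i H). Qed.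

Lemma Y_obsE j i s : X (a_observedE (CV j) (CV i) s) -> Y (a_observedE (CV j) (CV i) s).
Proof. move=> [H [t [Ht ->]]]; exact: fact (@t_observedE V E sigma input mu j i t H Ht). Qed.

Lemma Y_obsV i s : X (a_observedV (CV i) s) -> Y (a_observedV (CV i) s).
Proof. move=> [t [Ht ->]]; exact: fact (@t_observedV V E sigma input mu i t Ht). Qed.

Lemma Y_input i : X (a_input (CV i)) -> Y (a_input (CV i)).
Proof. move=> H; exact: fact (@t_input V E sigma input mu i H). Qed.

Lemma Y_r3 i : ~~ input i -> Y (a_active (CV i)) \/ Y (a_inactive (CV i)).
Proof.
move=> ni.
have [h [Hh Yh]] := @fire _ (r3 E (CV i)) (fun c H => ltac:(case: H => [<-|[]]; by apply/negP))
  (fun b H => ltac:(case: H => [<-|[]]; exact: Y_vertex)).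
by case: Hh Yh => [<-|[<-|[]]]; [left|right].
Qed.

Lemma Y_active i : X (a_active (CV i)) -> Y (a_active (CV i)).
Proof.
move=> /= iW; case: (Y_r3 (W_noinput iW)) => // /HYX /= [_].
by rewrite iW.
Qed.

Lemma Y_inactive i : X (a_inactive (CV i)) -> Y (a_inactive (CV i)).
Proof.
move=> /= [ni niW]; case: (Y_r3 ni) => // /HYX /= iW.
by rewrite iW in niW.
Qed.

Lemma Y_edgeMIC j i : X (a_edgeMIC (CV j) (CV i)) -> Y (a_edgeMIC (CV j) (CV i)).
Proof.
move=> /= [Eji iW]; apply: (fire1 (r4 E (CV j) (CV i))) => b /= [<-|[<-|[]]].
  exact: Y_edge.
exact: Y_active.
Qed.

Lemma Y_vmic v : X (a_vertexMIC (CV v)) -> Y (a_vertexMIC (CV v)).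
Proof.
move=> /= [vW|[j [Evj jW]]].
  by apply: (fire1 (r6 E (CV v))) => b /= [<-|[]]; apply: Y_active.
apply: (fire1 (r5 E (CV v) (CV j))) => b /= [<-|[]].
exact: Y_edgeMIC.
Qed.

Definition mu' (v : V) : sign :=
  match mu v with Some s => s | None =>
    if excluded_middle_informative (Y (a_labelV (CV v) cP)) then Plus else Minus end.
Definition sigma' (u v : V) : sign :=
  match sigma u v with Some s => s | None =>
    if excluded_middle_informative (Y (a_labelE (CV u) (CV v) cP)) then Plus else Minus end.

Lemma ext_mu' : extendsV mu mu'.
Proof. by move=> i s H; rewrite /mu' H. Qed.
Lemma ext_sigma' : extendsE E sigma sigma'.
Proof. by move=> j i s _ H; rewrite /sigma' H. Qed.

Lemma Y_lab v : vmic v -> Y (a_labelV (CV v) (cs (mu' v))).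
Proof.
move=> vm; rewrite /mu'; case Hmu: (mu v) => [s|].
  apply: (fire1 (r1 E (CV v) (cs s))) => b /= [<-|[]].
  by apply: Y_obsV; exists s.
case: excluded_middle_informative => [//|nY].
have [h [Hh Yh]] := @fire _ (r7 E (CV v)) (fun c (H : In c nil) => match H with end)
  (fun b H => ltac:(case: H => [<-|[]]; exact: Y_vmic)).
by case: Hh Yh => [<-|[<-|[]]].
Qed.

Lemma Y_labE u v : E u v -> v \in W -> Y (a_labelE (CV u) (CV v) (cs (sigma' u v))).
Proof.
move=> Euv vW; rewrite /sigma'; case Hs: (sigma u v) => [s|].
  apply: (fire1 (r2 E (CV u) (CV v) (cs s))) => b /= [<-|[]].
  by apply: Y_obsE; split=> //; exists s.
case: excluded_middle_informative => [//|nY].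
have [h [Hh Yh]] := @fire _ (r8 E (CV u) (CV v)) (fun c (H : In c nil) => match H with end)
  (fun b H => ltac:(case: H => [<-|[]]; exact: Y_edgeMIC)).
by case: Hh Yh => [<-|[<-|[]]].
Qed.

Lemma Y_bot : Y bot.
Proof.
have [i [iW [ni nc]]] := HM.1 _ _ ext_sigma' ext_mu'.
apply: (fire1 (r11 E (CV i))) => b /= [<-|Hb]; first exact: Y_active.
have [u [Eui ->]] := inmap Hb.
have nc' : mu' i <> smul (mu' u) (sigma' u i) by move=> e; apply: nc; exists u.
have hu := Y_lab (or_intror (ex_intro _ i (conj Eui iW))).
have hi := Y_lab (or_introl iW).
have he := Y_labE Eui iW.
move: nc' hu hi he; case: (mu' u); case: (mu' i); case: (sigma' u i) => //= _ hu hi he.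
all: first
  [ by apply: (fire1 (@r10 _ E (CV u) (CV i) cM cP ltac:(done))) => x /= [<-|[<-|[<-|[]]]]
  | by apply: (fire1 (@r10 _ E (CV u) (CV i) cP cM ltac:(done))) => x /= [<-|[<-|[<-|[]]]]
  | by apply: (fire1 (r9 E (CV u) (CV i) cP)) => x /= [<-|[<-|[<-|[]]]]
  | by apply: (fire1 (r9 E (CV u) (CV i) cM)) => x /= [<-|[<-|[<-|[]]]] ].
Qed.

Lemma Y_labV i s : X (a_labelV (CV i) s) -> Y (a_labelV (CV i) s).
Proof.
move=> /= [->|->].
  apply: (fire1 (r13 E (CV i))) => x /= [<-|[<-|[]]]; [exact: Y_bot|exact: Y_vertex].
apply: (fire1 (r14 E (CV i))) => x /= [<-|[<-|[]]]; [exact: Y_bot|exact: Y_vertex].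
Qed.

Lemma Y_labE' j i s : X (a_labelE (CV j) (CV i) s) -> Y (a_labelE (CV j) (CV i) s).
Proof.
move=> /= [Eji [->|->]].
  by apply: (fire1 (r15 E (CV j) (CV i))) => x /= [<-|[<-|[]]]; [exact: Y_bot|exact: Y_edge].
by apply: (fire1 (r16 E (CV j) (CV i))) => x /= [<-|[<-|[]]]; [exact: Y_bot|exact: Y_edge].
Qed.

Lemma Y_opp j i : X (a_opposite (CV j) (CV i)) -> Y (a_opposite (CV j) (CV i)).
Proof.
move=> /= Eji.
apply: (fire1 (r9 E (CV j) (CV i) cP)) => x /= [<-|[<-|[<-|[]]]].
- by apply: Y_labE'; split=> //; right.
- by apply: Y_labV; left.
- by apply: Y_labV; left.
Qed.

Lemma Y_lv' w v s : X (a_labelV' (CV w) (CV v) s) -> Y (a_labelV' (CV w) (CV v) s).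
Proof.
move=> /= [wW [[vm|obs] ->]].
  have [h [Hh Yh]] := @fire _ (r17 E (CV w) (CV v)) (fun c (H : In c nil) => match H with end)
    (fun b H => ltac:(case: H => [<-|[<-|[]]]; [exact: Y_active|exact: Y_vmic])).
  move: (HYX Yh); case: Hh Yh => [<-|[<-|[]]] Yh /= [_ [_ e]]; by rewrite -e.
case Hmu: (mu v) obs => [t|] // _.
have Yt : Y (a_labelV' (CV w) (CV v) (cs t)).
  apply: (fire1 (r19 E (CV w) (CV v) (cs t))) => x /= [<-|[<-|[]]].
    exact: Y_active.
  by apply: Y_obsV; exists t.
by move: (HYX Yt) => /= [_ [_ <-]].
Qed.

Lemma Y_le' w u v s : X (a_labelE' (CV w) (CV u) (CV v) s) -> Y (a_labelE' (CV w) (CV u) (CV v) s).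
Proof.
move=> /= [wW [[Euv [vW|obs]] ->]].
  have [h [Hh Yh]] := @fire _ (r18 E (CV w) (CV u) (CV v)) (fun c (H : In c nil) => match H with end)
    (fun b H => ltac:(case: H => [<-|[<-|[]]]; [exact: Y_active|exact: Y_edgeMIC])).
  move: (HYX Yh); case: Hh Yh => [<-|[<-|[]]] Yh /= [_ [_ e]]; by rewrite -e.
case Hs: (sigma u v) obs => [t|] // _.
have Yt : Y (a_labelE' (CV w) (CV u) (CV v) (cs t)).
  apply: (fire1 (r20 E (CV w) (CV u) (CV v) (cs t))) => x /= [<-|[<-|[]]].
    exact: Y_active.
  by apply: Y_obsE; split=> //; exists t.
by move: (HYX Yt) => /= [_ [_ <-]].
Qed.

Lemma Y_rec w v s : X (a_receive' (CV w) (CV v) s) -> Y (a_receive' (CV w) (CV v) s).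
Proof.
move=> /= [wW [vw [u [eu [vu ->]]]]].
have Yle := @Y_le' w u v (cs (lew w u v)) (ltac:(by split)).
have Ylv := @Y_lv' w u (cs (lvw w u)) (ltac:(by split)).
have vw' : CV v <> CV w by case.
move: Yle Ylv; case: (lvw w u); case: (lew w u v) => /= Yle Ylv.
all: first
  [ by apply: (fire1 (@r21 _ E (CV w) (CV u) (CV v) cP vw')) => x /= [<-|[<-|[]]]
  | by apply: (fire1 (@r21 _ E (CV w) (CV u) (CV v) cM vw')) => x /= [<-|[<-|[]]]
  | by apply: (fire1 (@r22 _ E (CV w) (CV u) (CV v) cP cM vw' ltac:(done))) => x /= [<-|[<-|[]]]
  | by apply: (fire1 (@r22 _ E (CV w) (CV u) (CV v) cM cP vw' ltac:(done))) => x /= [<-|[<-|[]]] ].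
Qed.

Lemma Y_all a : X a -> Y a.
Proof.
move=> Xa; destruct a; repeat match goal with c : const V |- _ => destruct c end;
  try (simpl in Xa; contradiction).
all: first
  [ exact: Y_vertex | exact: Y_edge Xa | exact: Y_obsE Xa | exact: Y_obsV Xa
  | exact: Y_input Xa | exact: Y_labV Xa | exact: Y_labE' Xa | exact: Y_active Xa
  | exact: Y_inactive Xa | exact: Y_edgeMIC Xa | exact: Y_vmic Xa | exact: Y_opp Xa
  | exact: Y_bot | exact: Y_lv' Xa | exact: Y_le' Xa | exact: Y_rec Xa ].
Qed.

End Min.

Lemma main : exists X0 : atom V -> Prop,
    answer_set (PD_tau E sigma input mu) X0 /\
    (forall c : const V, X0 (a_active c) <-> exists2 i, c = CV i & i \in W).
Proof.
exists X; split.
  split; first exact: X_model.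
  move=> Y HYX HY a; exact: Y_all.
move=> c; split.
  by case: c => //= i iW; exists i.
by case=> i -> /=.
Qed.

End Proof.

Theorem theorem4 (V : finType) (E : rel V) (sigma : V -> V -> option sign)
    (input : pred V) (mu : V -> option sign) (W : {set V}) :
  isMIC E sigma input mu W ->
  exists X : atom V -> Prop,
    answer_set (PD_tau E sigma input mu) X /\
    (forall c : const V, X (a_active c) <-> exists2 i, c = CV i & i \in W).
Proof. move=> HM; exact: main HM. Qed.
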